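(* Let $P$ be the transition matrix of a reversible and ergodic Markov chain on $V$ with stationary distribution $\pi$ and mixing rate $t^*$. For the quasi-random router model for $P$ with any initial configuration of $M$ tokens, $$\left|\chi^{(T)}_w-\mu^{(T)}_w\right|\le\frac{6\pi_w}{\pi_{\min}}\,\lg(M+1)\,t^*\,\Delta$$ for all $w\in V$ and $T\ge0$.
   Context: Let $V=\{1,\dots,N\}$ and let $P\in\mathbb{R}_{\ge 0}^{N\times N}$ be an ergodic (irreducible, aperiodic) stochastic matrix with stationary distribution $\pi$; $\pi_{\min}=\min_v\pi_v$; reversible means $\pi_uP_{u,v}=\pi_vP_{v,u}$ for all $u,v$. For $v\in V$ let $\mathcal N(v)=\{u: P_{v,u}>0\}$, $\delta(v)=|\mathcal N(v)|$, $\Delta=\max_v\delta(v)$; $\lg=\log_2$. Total variation distance $d_{TV}(\xi,\zeta)=\frac12\|\xi-\zeta\|_1$; mixing time $\tau(\varepsilon)=\max_{v}\min\{t\ge0: d_{TV}(P^t_{v,\cdot},\pi)\le\varepsilon\}$; mixing rate $t^*=\tau(1/4)$. The van der Corput function $\psi$: $\psi(0)=0$ and for $i=\sum_j\beta_j(i)2^j>0$ in binary, $\psi(i)=\sum_j\beta_j(i)2^{-(j+1)}$. The quasi-random router: fix an ordering $u_1,\dots,u_{\delta(v)}$ of $\mathcal N(v)$ and set $\sigma_v(i)=u_k$ where $\sum_{j=1}^{k-1}P_{v,u_j}\le\psi(i)<\sum_{j=1}^{k}P_{v,u_j}$. Write $I_{v,u}[z,z')=|\{j\in\{z,\dots,z'-1\}:\sigma_v(j)=u\}|$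 (zero if $z'\le z$). Given $\chi^{(0)}\in\mathbb{Z}_{\ge0}^N$ with $\sum_v\chi^{(0)}_v=M$, set $Z^{(t)}_{v,u}=I_{v,u}\big[\sum_{s=0}^{t-1}\chi^{(s)}_v,\sum_{s=0}^{t}\chi^{(s)}_v\big)$, $\chi^{(t+1)}_u=\sum_vZ^{(t)}_{v,u}$, $\mu^{(0)}=\chi^{(0)}$, $\mu^{(t)}=\mu^{(0)}P^t$. *)

(* Defs.v *)
(* Vertices V = {1..N} are
   represented as 0..N-1. *)
From Stdlib Require Import Reals Arith List.
Open Scope R_scope.

Definition Rsum (N : nat) (f : nat -> R) : R :=
  fold_right Rplus 0 (map f (seq 0 N)).
Definition nsum (N : nat) (f : nat -> nat) : nat :=
  fold_right Nat.add 0%nat (map f (seq 0 N)).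

Fixpoint Ppow (N : nat) (P : nat -> nat -> R) (t : nat) : nat -> nat -> R :=
  match t with
  | O => fun u v => if Nat.eq_dec u v then 1 else 0
  | S t' => fun u v => Rsum N (fun k => Ppow N P t' u k * P k v)
  end.

Definition stochastic (N : nat) (P : nat -> nat -> R) : Prop :=
  (forall u v, (u < N)%nat -> (v < N)%nat -> 0 <= P u v) /\
  (forall u, (u < N)%nat -> Rsum N (fun v => P u v) = 1).

Definition irreducible (N : nat) (P : nat -> nat -> R) : Prop :=
  forall u v, (u < N)%nat -> (v < N)%nat -> exists t, 0 < Ppow N P t u v.

(* period of every state is 1: gcd { t >= 1 : P^t_{v,v} > 0 } = 1 *)
Definition aperiodic (N : nat) (P : nat -> nat -> R) : Prop :=
  forall v, (v < N)%nat ->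
    forall d : nat,
      (forall t, (1 <= t)%nat -> 0 < Ppow N P t v v -> Nat.divide d t) ->
      d = 1%nat.

Definition ergodic (N : nat) (P : nat -> nat -> R) : Prop :=
  stochastic N P /\ irreducible N P /\ aperiodic N P.

Definition stationary (N : nat) (P : nat -> nat -> R) (pi : nat -> R) : Prop :=
  (forall v, (v < N)%nat -> 0 <= pi v) /\
  Rsum N pi = 1 /\
  (forall v, (v < N)%nat -> Rsum N (fun u => pi u * P u v) = pi v).

Definition reversible (N : nat) (P : nat -> nat -> R) (pi : nat -> R) : Prop :=
  forall u v, (u < N)%nat -> (v < N)%nat -> pi u * P u v = pi v * P v u.

Definition pi_min (N : nat) (pi : nat -> R) : R :=
  fold_right Rmin (pi 0%nat) (map pi (seq 0 N)).

Definition dTV_t (N : nat) (P : nat -> nat -> R) (pi : nat -> R) (v t : nat) : R :=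
  / 2 * Rsum N (fun u => Rabs (Ppow N P t v u - pi u)).

Definition is_least (Q : nat -> Prop) (t : nat) : Prop :=
  Q t /\ forall s, Q s -> (t <= s)%nat.

(* tau(eps) = max_v min { t >= 0 : d_TV(P^t_{v,.}, pi) <= eps } *)
Definition is_mixing_time (N : nat) (P : nat -> nat -> R) (pi : nat -> R)
  (eps : R) (tau : nat) : Prop :=
  (forall v, (v < N)%nat ->
     exists tv, is_least (fun t => dTV_t N P pi v t <= eps) tv /\ (tv <= tau)%nat) /\
  (exists v, (v < N)%nat /\ is_least (fun t => dTV_t N P pi v t <= eps) tau).

Definition is_mixing_rate (N : nat) (P : nat -> nat -> R) (pi : nat -> R)
  (tstar : nat) : Prop := is_mixing_time N P pi (/ 4) tstar.

Definition degree (N : nat) (P : nat -> nat -> R) (v : nat) : nat :=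
  length (filter (fun u => if Rlt_dec 0 (P v u) then true else false) (seq 0 N)).
Definition max_degree (N : nat) (P : nat -> nat -> R) : nat :=
  fold_right Nat.max 0%nat (map (degree N P) (seq 0 N)).

Definition lg (x : R) : R := ln x / ln 2.

(* van der Corput function: psi(i) = sum_j beta_j(i) 2^{-(j+1)}
   (all bits of i beyond position i are zero since i < 2^i) *)
Definition psi (i : nat) : R :=
  Rsum i (fun j => if Nat.testbit i j then (/ 2) ^ (S j) else 0).

Definition is_nbr_ordering (N : nat) (P : nat -> nat -> R) (ord : nat -> list nat) : Prop :=
  forall v, (v < N)%nat ->
    NoDup (ord v) /\ (forall u, In u (ord v) <-> ((u < N)%nat /\ 0 < P v u)).

(* returns the first u_k with x < acc + sum_{j<=k} P_{v,u_j};
   this is the u_k with sum_{j<k} <= x < sum_{j<=k} (for x >= acc) *)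
Fixpoint route_aux (P : nat -> nat -> R) (v : nat) (l : list nat) (acc x : R) : nat :=
  match l with
  | nil => 0%nat
  | u :: l' => if Rlt_dec x (acc + P v u) then u else route_aux P v l' (acc + P v u) x
  end.

Definition sigma (P : nat -> nat -> R) (ord : nat -> list nat) (v i : nat) : nat :=
  route_aux P v (ord v) 0 (psi i).

Definition Icount (P : nat -> nat -> R) (ord : nat -> list nat) (v u z z' : nat) : nat :=
  length (filter (fun j => Nat.eqb (sigma P ord v j) u) (seq z (z' - z))).

(* (chi^(t), fun v => sum_{s<t} chi^(s)_v) *)
Fixpoint qr_state (N : nat) (P : nat -> nat -> R) (ord : nat -> list nat)
  (chi0 : nat -> nat) (t : nat) : (nat -> nat) * (nat -> nat) :=
  match t with
  | O => (chi0, fun _ => 0%nat)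
  | S t' =>
      let (c, s) := qr_state N P ord chi0 t' in
      (fun u => nsum N (fun v => Icount P ord v u (s v) (s v + c v)),
       fun v => (s v + c v)%nat)
  end.

Definition chi (N : nat) (P : nat -> nat -> R) (ord : nat -> list nat)
  (chi0 : nat -> nat) (t : nat) : nat -> nat := fst (qr_state N P ord chi0 t).

Definition mu (N : nat) (P : nat -> nat -> R) (chi0 : nat -> nat) (t w : nat) : R :=
  Rsum N (fun v => INR (chi0 v) * Ppow N P t v w).

(* Main.v *)
Require Import Defs.
From Stdlib Require Import Reals Arith List Lia Lra Permutation.
Open Scope R_scope.

Lemma Rs_0 f : Rsum 0 f = 0.
Proof. reflexivity. Qed.

Lemma fold_Rplus_app l1 l2 : fold_right Rplus 0 (l1 ++ l2) = fold_right Rplus 0 l1 + fold_right Rplus 0 l2.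
Proof. induction l1; simpl; [ring| rewrite IHl1; ring]. Qed.

Lemma Rs_S N f : Rsum (S N) f = Rsum N f + f N.
Proof. unfold Rsum. rewrite seq_S, map_app, fold_Rplus_app. simpl. ring. Qed.

Lemma Rs_ext N f g : (forall i, (i < N)%nat -> f i = g i) -> Rsum N f = Rsum N g.
Proof. induction N; intros H; [reflexivity|]. rewrite !Rs_S, IHN, H; auto. Qed.

Lemma Rs_plus N f g : Rsum N (fun i => f i + g i) = Rsum N f + Rsum N g.
Proof. induction N; [unfold Rsum; simpl; ring|]. rewrite !Rs_S, IHN; ring. Qed.

Lemma Rs_minus N f g : Rsum N (fun i => f i - g i) = Rsum N f - Rsum N g.
Proof. induction N; [unfold Rsum; simpl; ring|]. rewrite !Rs_S, IHN; ring. Qed.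

Lemma Rs_scal N c f : Rsum N (fun i => c * f i) = c * Rsum N f.
Proof. induction N; [unfold Rsum; simpl; ring|]. rewrite !Rs_S, IHN; ring. Qed.

Lemma Rs_scal_r N c f : Rsum N (fun i => f i * c) = Rsum N f * c.
Proof. induction N; [unfold Rsum; simpl; ring|]. rewrite !Rs_S, IHN; ring. Qed.

Lemma Rs_le N f g : (forall i, (i < N)%nat -> f i <= g i) -> Rsum N f <= Rsum N g.
Proof. induction N; intros H; [unfold Rsum; simpl; lra|]. rewrite !Rs_S. 
  assert (f N <= g N) by auto. assert (Rsum N f <= Rsum N g) by auto. lra. Qed.

Lemma Rs_nonneg N f : (forall i, (i < N)%nat -> 0 <= f i) -> 0 <= Rsum N f.
Proof. intros H. replace 0 with (Rsum N (fun _ => 0)). apply Rs_le; auto.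
  induction N; [reflexivity|]. rewrite Rs_S, IHN; [ring|auto]. Qed.

Lemma Rs_abs N f : Rabs (Rsum N f) <= Rsum N (fun i => Rabs (f i)).
Proof. induction N; [unfold Rsum; simpl; rewrite Rabs_R0; lra|]. rewrite !Rs_S.
  eapply Rle_trans; [apply Rabs_triang|]. lra. Qed.

Lemma Rs_swap N M f : Rsum N (fun i => Rsum M (fun j => f i j)) = Rsum M (fun j => Rsum N (fun i => f i j)).
Proof. induction N.
  - rewrite Rs_0. induction M; [reflexivity|]. rewrite Rs_S, <- IHM, Rs_0. ring.
  - rewrite Rs_S, IHN. rewrite <- Rs_plus. apply Rs_ext; intros; rewrite Rs_S; reflexivity. Qed.

Lemma Rs_const N c : Rsum N (fun _ => c) = INR N * c.
Proof. induction N; [unfold Rsum; simpl; ring|]. rewrite Rs_S, IHN, S_INR; ring. Qed.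

Lemma Rs_delta_l N f w : (w < N)%nat -> Rsum N (fun i => f i * (if Nat.eq_dec i w then 1 else 0)) = f w.
Proof. induction N; intros H; [lia|]. rewrite Rs_S. destruct (Nat.eq_dec N w).
  - subst. rewrite (Rs_ext _ _ (fun _ => 0)). rewrite Rs_const; ring.
    intros i Hi; destruct (Nat.eq_dec i w); [lia|ring].
  - rewrite IHN; [ring|lia]. Qed.

Lemma Rs_delta_r N f w : (w < N)%nat -> Rsum N (fun i => (if Nat.eq_dec w i then 1 else 0) * f i) = f w.
Proof. intros H. rewrite <- (Rs_delta_l N f w H). apply Rs_ext; intros i _.
  destruct (Nat.eq_dec w i), (Nat.eq_dec i w); subst; try ring; congruence. Qed.

Lemma Rs_ge_term N f i : (forall j, (j < N)%nat -> 0 <= f j) -> (i < N)%nat -> f i <= Rsum N f.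
Proof. induction N; intros H Hi; [lia|]. rewrite Rs_S.
  assert (0 <= f N) by auto. assert (0 <= Rsum N f) by (apply Rs_nonneg; auto).
  destruct (Nat.eq_dec i N); [subst; lra|]. assert (f i <= Rsum N f) by (apply IHN; auto; lia). lra. Qed.

Lemma Rs_S_left N f : Rsum (S N) f = f 0%nat + Rsum N (fun i => f (S i)).
Proof. induction N; [unfold Rsum; simpl; ring|]. rewrite Rs_S, IHN, (Rs_S N). ring. Qed.

Lemma nsum_S N f : nsum (S N) f = (nsum N f + f N)%nat.
Proof. unfold nsum. rewrite seq_S, map_app.
  assert (forall l1 l2, fold_right Nat.add 0%nat (l1 ++ l2) = (fold_right Nat.add 0%nat l1 + fold_right Nat.add 0%nat l2)%nat).
  { induction l1; simpl; intros; [lia| rewrite IHl1; lia]. }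
  rewrite H. simpl. lia. Qed.

Lemma INR_nsum N f : INR (nsum N f) = Rsum N (fun i => INR (f i)).
Proof. induction N; [reflexivity|]. rewrite nsum_S, Rs_S, plus_INR, IHN; reflexivity. Qed.

Definition bt (j i : nat) : R := if Nat.testbit j i then (/ 2) ^ (S i) else 0.
Definition Sb (m j : nat) : R := Rsum m (bt j).

Lemma psi_Sb j : psi j = Sb j j.
Proof. reflexivity. Qed.

Lemma Sb_succ m j : Sb (S m) j = bt j 0 + / 2 * Sb m (j / 2).
Proof. unfold Sb. rewrite Rs_S_left. f_equal. rewrite <- Rs_scal. apply Rs_ext; intros i _.
  unfold bt. rewrite Nat.div2_bits. destruct (Nat.testbit j (S i)); simpl; ring. Qed.

Lemma bt_zero j i : (j < 2 ^ i)%nat -> bt j i = 0.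
Proof. intros H. unfold bt. rewrite Nat.testbit_eqb, Nat.div_small; auto. Qed.

Lemma Sb_stable m j d : (j < 2 ^ m)%nat -> Sb (m + d) j = Sb m j.
Proof. intros H. induction d. rewrite Nat.add_0_r; auto.
  unfold Sb in *. rewrite Nat.add_succ_r, Rs_S, IHd, bt_zero. ring.
  apply Nat.lt_le_trans with (2 ^ m)%nat; auto. apply Nat.pow_le_mono_r; lia. Qed.

Lemma psi_eq m j : (j <= m)%nat -> psi j = Sb m j.
Proof. intros H. rewrite psi_Sb. replace m with (j + (m - j))%nat by lia.
  rewrite Sb_stable; auto. apply Nat.pow_gt_lin_r; lia. Qed.

Lemma psi_even a : psi (2 * a) = / 2 * psi a.
Proof. rewrite (psi_eq (S (2 * a))) by lia. rewrite Sb_succ.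
  unfold bt at 1. rewrite Nat.testbit_even_0. rewrite <- Nat.div2_div, Nat.div2_double.
  rewrite (psi_eq (2 * a) a) by lia. ring. Qed.

Lemma psi_odd a : psi (2 * a + 1) = / 2 + / 2 * psi a.
Proof. rewrite (psi_eq (S (2 * a + 1))) by lia. rewrite Sb_succ.
  unfold bt at 1. rewrite Nat.testbit_odd_0. rewrite <- Nat.div2_div.
  replace (2 * a + 1)%nat with (S (2 * a)) by lia. rewrite Nat.div2_succ_double.
  rewrite (psi_eq (S (2 * a)) a) by lia. simpl; ring. Qed.

Lemma Sb_bounds m j : 0 <= Sb m j <= 1 - (/ 2) ^ m.
Proof. revert j; induction m; intros j.
  - unfold Sb; rewrite Rs_0, pow_O; lra.
  - rewrite Sb_succ. destruct (IHm (j / 2)%nat). unfold bt. rewrite <- tech_pow_Rmult. simpl pow at 1. rewrite ?Rmult_1_r.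
    assert (0 < (/2) ^ m) by (apply pow_lt; lra).
    assert (E: (/2)^(S m) = /2 * (/2)^m) by reflexivity. rewrite E. destruct (Nat.testbit j 0); lra. Qed.

Lemma psi_bounds j : 0 <= psi j < 1.
Proof. rewrite psi_Sb. destruct (Sb_bounds j j). assert (0 < (/2) ^ j) by (apply pow_lt; lra). lra. Qed.

Definition ltb (a b : R) : bool := if Rlt_dec a b then true else false.
Definition cntx (x : R) (z n : nat) : nat := length (filter (fun j => ltb (psi j) x) (seq z n)).

Lemma cntx_app x z a b : cntx x z (a + b) = (cntx x z a + cntx x (z + a) b)%nat.
Proof. unfold cntx. rewrite seq_app, filter_app, length_app. reflexivity. Qed.

Lemma cntx_S x z m : cntx x z (S m) = (cntx x z m + (if ltb (psi (z + m)) x then 1 else 0))%nat.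
Proof. replace (S m) with (m + 1)%nat by lia. rewrite cntx_app. unfold cntx at 2. simpl.
  destruct (ltb _ _); simpl; lia. Qed.

Lemma ltb_half_even x y : ltb (/ 2 * y) x = ltb y (2 * x).
Proof. unfold ltb. destruct (Rlt_dec (/2*y) x), (Rlt_dec y (2*x)); auto; lra. Qed.
Lemma ltb_half_odd x y : ltb (/ 2 + / 2 * y) x = ltb y (2 * x - 1).
Proof. unfold ltb. destruct (Rlt_dec (/2 + /2*y) x), (Rlt_dec y (2*x-1)); auto; lra. Qed.

Lemma cntx_split x z m : exists a a', cntx x z (2 * m) = (cntx (2 * x) a m + cntx (2 * x - 1) a' m)%nat.
Proof.
  destruct (Nat.Even_or_Odd z) as [[a Ha]|[a Ha]]; subst z.
  - exists a, a. induction m. reflexivity.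
    replace (2 * S m)%nat with (S (S (2 * m))) by lia. rewrite !cntx_S, IHm.
    replace (2 * a + S (2 * m))%nat with (2 * (a + m) + 1)%nat by lia.
    replace (2 * a + 2 * m)%nat with (2 * (a + m))%nat by lia.
    rewrite psi_even, psi_odd, ltb_half_even, ltb_half_odd. lia.
  - exists (S a), a. induction m. reflexivity.
    replace (2 * S m)%nat with (S (S (2 * m))) by lia. rewrite !cntx_S, IHm.
    replace (2 * a + 1 + S (2 * m))%nat with (2 * (S a + m))%nat by lia.
    replace (2 * a + 1 + 2 * m)%nat with (2 * (a + m) + 1)%nat by lia.
    rewrite psi_even, psi_odd, ltb_half_even, ltb_half_odd. lia.
Qed.

Lemma cntx_all x z n : 1 <= x -> cntx x z n = n.
Proof. intros H. induction n. reflexivity. rewrite cntx_S, IHn. unfold ltb.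
  destruct (Rlt_dec (psi (z+n)) x). lia. destruct (psi_bounds (z+n)); lra. Qed.

Lemma cntx_none x z n : x <= 0 -> cntx x z n = 0%nat.
Proof. intros H. induction n. reflexivity. rewrite cntx_S, IHn. unfold ltb.
  destruct (Rlt_dec (psi (z+n)) x). destruct (psi_bounds (z+n)); lra. lia. Qed.

Lemma cntx_block k : forall z x, 0 <= x <= 1 -> Rabs (INR (cntx x z (2 ^ k)) - 2 ^ k * x) <= 1.
Proof. induction k; intros z x Hx.
  - simpl. rewrite cntx_S. unfold cntx; simpl. unfold ltb. destruct (Rlt_dec _ _); simpl;
    apply Rabs_le; lra.
  - rewrite Nat.pow_succ_r'. destruct (cntx_split x z (2 ^ k)) as [a [a' E]]. rewrite E, plus_INR.
    destruct (Rle_lt_dec x (/2)).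
    + rewrite (cntx_none (2*x-1)) by lra. simpl INR at 2.
      specialize (IHk a (2 * x) ltac:(lra)). replace (2 ^ S k * x) with (2 ^ k * (2 * x)) by (simpl; ring).
      rewrite Rplus_0_r. auto.
    + rewrite (cntx_all (2*x)) by lra. rewrite pow_INR. replace (INR 2) with 2 by (simpl; ring).
      specialize (IHk a' (2 * x - 1) ltac:(lra)).
      replace (2 ^ k + INR (cntx (2 * x - 1) a' (2 ^ k)) - 2 ^ S k * x) with
        (INR (cntx (2 * x - 1) a' (2 ^ k)) - 2 ^ k * (2 * x - 1)) by (rewrite <- tech_pow_Rmult; ring). auto.
Qed.

Lemma ln2_pos : 0 < ln 2.
Proof. rewrite <- ln_1. apply ln_increasing; lra. Qed.

Lemma lg_le a b : 0 < a -> a <= b -> lg a <= lg b.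
Proof. intros Ha Hab. unfold lg. apply Rmult_le_compat_r.
  left; apply Rinv_0_lt_compat, ln2_pos.
  destruct Hab. left; apply ln_increasing; auto. subst; lra. Qed.

Lemma lg_double a : 0 < a -> lg (2 * a) = 1 + lg a.
Proof. intros Ha. unfold lg. rewrite ln_mult by lra. field. apply Rgt_not_eq, ln2_pos. Qed.

Lemma lg_1 : lg 1 = 0.
Proof. unfold lg; rewrite ln_1; unfold Rdiv; ring. Qed.

Lemma lg_nonneg a : 1 <= a -> 0 <= lg a.
Proof. intros; rewrite <- lg_1; apply lg_le; lra. Qed.

Lemma cntx_disc n : forall z x, 0 <= x <= 1 -> Rabs (INR (cntx x z n) - INR n * x) <= lg (INR n + 1).
Proof.
  induction n as [n IH] using lt_wf_ind. intros z x Hx.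
  destruct (Nat.eq_dec n 0) as [->|Hn].
  - unfold cntx; simpl. rewrite Rplus_0_l, lg_1. replace (0 - 0 * x) with 0 by ring. rewrite Rabs_R0; lra.
  - destruct (Nat.log2_spec n ltac:(lia)) as [H1 H2]. set (k := Nat.log2 n) in *.
    replace n with (2 ^ k + (n - 2 ^ k))%nat by lia.
    rewrite cntx_app, !plus_INR.
    assert (Hr : (n - 2 ^ k < n)%nat) by (assert (0 < 2 ^ k)%nat by (apply Nat.neq_0_lt_0, Nat.pow_nonzero; lia); lia).
    specialize (IH _ Hr (z + 2 ^ k)%nat x Hx).
    pose proof (cntx_block k z x Hx) as Hb. rewrite pow_INR in *. replace (INR 2) with 2 in * by (simpl; ring).
    set (c1 := INR (cntx x z (2 ^ k))) in *. set (c2 := INR (cntx x (z + 2 ^ k) (n - 2 ^ k))) in *.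
    set (r := INR (n - 2 ^ k)) in *.
    eapply Rle_trans with (Rabs (c1 - 2 ^ k * x) + Rabs (c2 - r * x)).
    { replace (c1 + c2 - (2 ^ k + r) * x) with ((c1 - 2 ^ k * x) + (c2 - r * x)) by ring. apply Rabs_triang. }
    assert (0 <= r) by apply pos_INR.
    eapply Rle_trans with (1 + lg (r + 1)). lra.
    rewrite <- lg_double by lra. apply lg_le. lra.
    assert (Hle : (2 * (n - 2 ^ k + 1) <= n + 1)%nat). { rewrite Nat.pow_succ_r' in H2. lia. }
    apply le_INR in Hle. rewrite mult_INR, !plus_INR in Hle. unfold r.
    replace (INR 2) with 2 in Hle by (simpl; ring). simpl INR in Hle at 2. 
    assert (E : INR n = 2 ^ k + INR (n - 2 ^ k)).
    { rewrite minus_INR by auto. rewrite pow_INR. replace (INR 2) with 2 by (simpl; ring). ring. }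
    simpl INR in Hle. lra.
Qed.

Definition lsum (f : nat -> R) (l : list nat) : R := fold_right Rplus 0 (map f l).

Fixpoint pre (f : nat -> R) (l : list nat) (u : nat) : R :=
  match l with nil => 0 | u0 :: l' => if Nat.eq_dec u0 u then 0 else f u0 + pre f l' u end.

Lemma lsum_nonneg f l : (forall u, In u l -> 0 <= f u) -> 0 <= lsum f l.
Proof. unfold lsum. induction l; simpl; intros H; [lra|]. assert (0 <= f a) by auto.
  assert (0 <= fold_right Rplus 0 (map f l)) by auto. lra. Qed.

Lemma pre_bounds f l u : (forall u, In u l -> 0 <= f u) -> In u l -> 0 <= pre f l u /\ pre f l u + f u <= lsum f l.
Proof. induction l; simpl; intros H Hu; [tauto|]. unfold lsum; simpl; fold (lsum f l).
  assert (0 <= f a) by auto. assert (0 <= lsum f l) by (apply lsum_nonneg; auto).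
  destruct (Nat.eq_dec a u). subst; lra. destruct Hu as [->|Hu]; [congruence|].
  destruct IHl; auto. lra. Qed.

Lemma route_spec P v l : NoDup l -> (forall u, In u l -> 0 <= P v u) ->
  forall acc x, acc <= x -> x < acc + lsum (P v) l ->
  In (route_aux P v l acc x) l /\
  forall u, In u l -> (route_aux P v l acc x = u <-> acc + pre (P v) l u <= x < acc + pre (P v) l u + P v u).
Proof.
  induction l as [|u0 l IH]; intros Hnd Hpos acc x Hax Hx.
  - unfold lsum in Hx; simpl in Hx; lra.
  - inversion Hnd as [|? ? Hn0 Hnd']; subst. unfold lsum in Hx; simpl in Hx; fold (lsum (P v) l) in Hx.
    assert (0 <= P v u0) by (apply Hpos; simpl; auto).
    simpl. destruct (Rlt_dec x (acc + P v u0)).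
    + split; [auto|]. intros u Hu. destruct (Nat.eq_dec u0 u).
      * subst. split; intros; auto; lra.
      * destruct Hu as [->|Hu]; [congruence|].
        destruct (pre_bounds (P v) l u) as [Hp _]; auto. intros; apply Hpos; simpl; auto.
        split; intros; [congruence|lra].
    + destruct (IH Hnd' ltac:(intros; apply Hpos; simpl; auto) (acc + P v u0) x ltac:(lra) ltac:(lra)) as [Hin Hsp].
      split; [auto|]. intros u Hu. destruct (Nat.eq_dec u0 u).
      * subst. split; intros; [congruence|lra].
      * destruct Hu as [->|Hu]; [congruence|]. rewrite Hsp by auto. split; intros; lra.
Qed.

Lemma lsum_perm f l l' : Permutation l l' -> lsum f l = lsum f l'.
Proof. induction 1; unfold lsum in *; simpl; try lra. Qed.

Lemma lsum_filter f l : (forall i, In i l -> 0 <= f i) -> lsum f (filter (fun u => ltb 0 (f u)) l) = lsum f l.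
Proof. unfold lsum. induction l; simpl; intros H; auto. unfold ltb at 1. destruct (Rlt_dec 0 (f a)); simpl.
  rewrite IHl; auto. assert (0 <= f a) by auto. assert (f a = 0) by lra. rewrite IHl; auto. lra. Qed.

Lemma Rs_lsum N f : Rsum N f = lsum f (seq 0 N).
Proof. reflexivity. Qed.

Lemma lsum_ord N f l : NoDup l -> (forall u, In u l <-> (u < N)%nat /\ 0 < f u) -> (forall u, (u < N)%nat -> 0 <= f u) ->
  lsum f l = Rsum N f.
Proof. intros Hnd Hl Hpos. rewrite Rs_lsum, <- (lsum_filter f (seq 0 N)).
  apply lsum_perm, NoDup_Permutation; try assumption. apply NoDup_filter, seq_NoDup.
  intros u. rewrite Hl, filter_In, in_seq. unfold ltb. destruct (Rlt_dec 0 (f u)); split; intros; intuition; try lia; congruence.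
  intros i Hi; apply in_seq in Hi; apply Hpos; lia. Qed.

Lemma filter_len3 (f g h : nat -> bool) l : (forall j, In j l -> (Nat.b2n (f j) + Nat.b2n (g j) = Nat.b2n (h j))%nat) ->
  (length (filter f l) + length (filter g l) = length (filter h l))%nat.
Proof. induction l; simpl; intros H; auto. specialize (IHl ltac:(auto)). specialize (H a ltac:(auto)).
  destruct (f a), (g a), (h a); simpl in *; lia. Qed.

Lemma filter_none {A} (f : A -> bool) l : (forall j, In j l -> f j = false) -> filter f l = nil.
Proof. induction l; simpl; intros H; auto. rewrite H by auto. apply IHl; auto. Qed.

Section Routing.
Variables (N : nat) (P : nat -> nat -> R) (ord : nat -> list nat) (v : nat).
Hypothesis Hst : stochastic N P.
Hypothesis Hord : is_nbr_ordering N P ord.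
Hypothesis Hv : (v < N)%nat.

Lemma ord_props : NoDup (ord v) /\ (forall u, In u (ord v) -> 0 <= P v u) /\ lsum (P v) (ord v) = 1.
Proof. destruct (Hord v Hv) as [Hnd Hin]. destruct Hst as [Hp Hs]. split; auto. split.
  intros u Hu. apply Hin in Hu. lra. rewrite (lsum_ord N); auto. Qed.

Lemma sigma_spec j : In (Defs.sigma P ord v j) (ord v) /\
  forall u, In u (ord v) -> (Defs.sigma P ord v j = u <-> pre (P v) (ord v) u <= psi j < pre (P v) (ord v) u + P v u).
Proof. destruct ord_props as [H1 [H2 H3]]. unfold Defs.sigma. destruct (psi_bounds j).
  destruct (route_spec P v (ord v) H1 H2 0 (psi j)) as [A B]; try lra. split; auto.
  intros u Hu. rewrite B; auto. rewrite !Rplus_0_l. tauto. Qed.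

Lemma Icount_in u z c : In u (ord v) ->
  (Icount P ord v u z (z + c) + cntx (pre (P v) (ord v) u) z c = cntx (pre (P v) (ord v) u + P v u) z c)%nat.
Proof. intros Hu. unfold Icount, cntx. replace (z + c - z)%nat with c by lia.
  apply filter_len3. intros j _. destruct (sigma_spec j) as [_ Hs]. specialize (Hs u Hu).
  unfold ltb. destruct (Nat.eqb_spec (Defs.sigma P ord v j) u); destruct (Rlt_dec (psi j) (pre (P v) (ord v) u));
   destruct (Rlt_dec (psi j) (pre (P v) (ord v) u + P v u)); simpl; try lia; exfalso;
   (assert (0 <= P v u) by (apply ord_props; auto)); tauto || (apply Hs in e; lra) || (apply n; apply Hs; lra).
Qed.

Lemma Icount_out u z c : ~ In u (ord v) -> Icount P ord v u z (z + c) = 0%nat.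
Proof. intros Hu. unfold Icount. rewrite filter_none. reflexivity.
  intros j _. destruct (sigma_spec j) as [Hin _]. destruct (Nat.eqb_spec (Defs.sigma P ord v j) u); congruence. Qed.

Lemma Icount_disc u z c : (u < N)%nat -> Rabs (INR (Icount P ord v u z (z + c)) - INR c * P v u) <= 2 * lg (INR c + 1).
Proof. intros HuN.
  assert (0 <= lg (INR c + 1)) by (apply lg_nonneg; pose proof (pos_INR c); lra).
  destruct (in_dec Nat.eq_dec u (ord v)) as [Hu|Hu].
  - pose proof (Icount_in u z c Hu) as E. destruct ord_props as [H1 [H2 H3]].
    destruct (pre_bounds (P v) (ord v) u H2 Hu). assert (0 <= P v u) by auto.
    set (a := pre (P v) (ord v) u) in *.
    assert (INR (Icount P ord v u z (z + c)) = INR (cntx (a + P v u) z c) - INR (cntx a z c)).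
    { rewrite <- E, plus_INR; ring. }
    rewrite H6. pose proof (cntx_disc c z a ltac:(lra)). pose proof (cntx_disc c z (a + P v u) ltac:(lra)).
    replace (INR (cntx (a + P v u) z c) - INR (cntx a z c) - INR c * P v u) with
      ((INR (cntx (a + P v u) z c) - INR c * (a + P v u)) - (INR (cntx a z c) - INR c * a)) by ring.
    eapply Rle_trans; [apply Rabs_triang|]. rewrite Rabs_Ropp. lra.
  - rewrite Icount_out by auto. destruct (Hord v Hv) as [_ Hin].
    assert (P v u = 0 \/ (u >= N)%nat).
    { destruct (lt_dec u N); [|right; lia]. left. destruct Hst as [Hp _]. specialize (Hp v u Hv l).
      destruct Hp; auto. exfalso; apply Hu, Hin; auto. }
    destruct H0; [|lia]. rewrite H0. simpl. rewrite Rmult_0_r, Rminus_0_r, Rabs_R0. lra.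
Qed.

Lemma Icount_sum z c : Rsum N (fun u => INR (Icount P ord v u z (z + c))) = INR c.
Proof. unfold Icount. replace (z + c - z)%nat with c by lia.
  assert (Hl : forall j, In j (seq z c) -> (Defs.sigma P ord v j < N)%nat).
  { intros j _. destruct (sigma_spec j) as [Hin _]. destruct (Hord v Hv) as [_ H]. apply H in Hin. tauto. }
  replace (INR c) with (INR (length (seq z c))) by (rewrite length_seq; auto). generalize (seq z c) Hl. clear Hl. intros l Hl.
  induction l as [|j l IH].
  - simpl; rewrite Rs_const; ring.
  - replace (INR (length (j :: l))) with (INR (length l) + 1) by (simpl length; rewrite S_INR; ring).
    rewrite <- IH by (intros; apply Hl; simpl; auto).
    rewrite (Rs_ext _ _ (fun u => INR (length (filter (fun j0 => Defs.sigma P ord v j0 =? u) l)) +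
       (if Nat.eq_dec (Defs.sigma P ord v j) u then 1 else 0))).
    rewrite Rs_plus. rewrite (Rs_ext N (fun u => if Nat.eq_dec (Defs.sigma P ord v j) u then 1 else 0)
       (fun i => (if Nat.eq_dec (Defs.sigma P ord v j) i then 1 else 0) * 1)) by (intros; ring).
    rewrite (Rs_delta_r N (fun _ => 1)) by (apply Hl; simpl; auto). ring.
    intros u _. simpl filter. destruct (Nat.eqb_spec (Defs.sigma P ord v j) u) as [E|E], (Nat.eq_dec (Defs.sigma P ord v j) u);
      try congruence; simpl length; rewrite ?S_INR; ring.
Qed.
End Routing.

Lemma Rs_split a b f : Rsum (a + b) f = Rsum a f + Rsum b (fun i => f (a + i)%nat).
Proof. induction b. rewrite Nat.add_0_r, Rs_0; ring.
  rewrite Nat.add_succ_r, !Rs_S, IHb. ring. Qed.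

Lemma Rs_rev T f : Rsum T (fun t => f (T - S t)%nat) = Rsum T f.
Proof. induction T. reflexivity. rewrite Rs_S_left, Rs_S.
  replace (S T - 1)%nat with T by lia. rewrite <- IHT. simpl. ring. Qed.

Lemma Rs_pos_ex n f : (forall i, (i < n)%nat -> 0 <= f i) -> 0 < Rsum n f -> exists u, (u < n)%nat /\ 0 < f u.
Proof. induction n; intros Hp H.
  - rewrite Rs_0 in H; lra.
  - rewrite Rs_S in H. destruct (Rlt_dec 0 (f n)). exists n; split; auto; lia.
    assert (0 < Rsum n f) by (assert (0 <= f n) by (apply Hp; lia); lra).
    destruct IHn as [u [Hu Hpu]]; auto. exists u; split; auto; lia. Qed.

Section Markov.
Variables (N : nat) (P : nat -> nat -> R) (pi : nat -> R).
Hypothesis Hst : stochastic N P.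
Hypothesis Hstat : stationary N P pi.
Hypothesis Hrev : reversible N P pi.
Hypothesis Hirr : irreducible N P.

Notation Pp := (Ppow N P).

Lemma Ppow_nonneg t u v : (u < N)%nat -> (v < N)%nat -> 0 <= Pp t u v.
Proof. revert v. induction t; intros v Hu Hv; simpl.
  destruct (Nat.eq_dec u v); lra.
  apply Rs_nonneg; intros k Hk. apply Rmult_le_pos; auto. apply Hst; auto. Qed.

Lemma Ppow_rows t u : (u < N)%nat -> Rsum N (fun v => Pp t u v) = 1.
Proof. intros Hu. induction t; simpl.
  - rewrite (Rs_ext _ _ (fun i => (if Nat.eq_dec u i then 1 else 0) * 1)) by (intros; ring).
    apply (Rs_delta_r N (fun _ => 1)); auto.
  - rewrite Rs_swap. rewrite <- IHt. apply Rs_ext; intros k Hk.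
    rewrite Rs_scal. destruct Hst as [_ Hs]. rewrite Hs; auto; ring. Qed.

Lemma Ppow_CK s t u v : (u < N)%nat -> (v < N)%nat -> Pp (s + t) u v = Rsum N (fun k => Pp s u k * Pp t k v).
Proof. revert v. induction t; intros v Hu Hv.
  - rewrite Nat.add_0_r. simpl. rewrite Rs_delta_l; auto.
  - rewrite Nat.add_succ_r. simpl.
    rewrite (Rs_ext _ _ (fun j => Rsum N (fun k => Pp s u k * Pp t k j * P j v))).
    rewrite Rs_swap. apply Rs_ext; intros k Hk. rewrite <- Rs_scal. apply Rs_ext; intros; ring.
    intros j Hj. rewrite IHt by auto. rewrite <- Rs_scal_r. reflexivity. Qed.

Lemma Ppow_left t u v : (u < N)%nat -> (v < N)%nat -> Pp (S t) u v = Rsum N (fun k => P u k * Pp t k v).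
Proof. intros Hu Hv. change (S t) with (1 + t)%nat. rewrite Ppow_CK by auto. apply Rs_ext; intros k Hk.
  f_equal. simpl. rewrite (Rs_delta_r N (fun j => P j k)); auto. Qed.

Lemma stat_t t v : (v < N)%nat -> Rsum N (fun u => pi u * Pp t u v) = pi v.
Proof. revert v. induction t; intros v Hv; simpl.
  - rewrite Rs_delta_l; auto.
  - rewrite (Rs_ext _ _ (fun u => Rsum N (fun k => pi u * Pp t u k * P k v))).
    rewrite Rs_swap. destruct Hstat as [_ [_ Hs]]. rewrite <- Hs by auto. apply Rs_ext; intros k Hk.
    rewrite <- IHt by auto. rewrite <- Rs_scal_r. reflexivity.
    intros u Hu. rewrite <- Rs_scal. apply Rs_ext; intros; ring. Qed.

Lemma rev_t t u v : (u < N)%nat -> (v < N)%nat -> pi u * Pp t u v = pi v * Pp t v u.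
Proof. revert u v. induction t; intros u v Hu Hv.
  - simpl. destruct (Nat.eq_dec u v), (Nat.eq_dec v u); subst; try ring; congruence.
  - rewrite (Ppow_left t v u) by auto. simpl. rewrite <- !Rs_scal. apply Rs_ext; intros k Hk.
    replace (pi u * (Pp t u k * P k v)) with ((pi u * Pp t u k) * P k v) by ring.
    rewrite IHt by auto. replace (pi k * Pp t k u * P k v) with (Pp t k u * (pi k * P k v)) by ring.
    rewrite Hrev by auto. ring. Qed.

Lemma pi_nonneg v : (v < N)%nat -> 0 <= pi v.
Proof. apply Hstat. Qed.

Lemma pi_pos v : (v < N)%nat -> 0 < pi v.
Proof. intros Hv. destruct Hstat as [Hp [Hs _]].
  assert (exists u, (u < N)%nat /\ 0 < pi u) as [u [Hu Hpu]].
  { apply Rs_pos_ex; auto. lra. }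
  destruct (Hirr u v Hu Hv) as [t Ht]. rewrite <- stat_t with (t := t) by auto.
  eapply Rlt_le_trans with (pi u * Pp t u v). apply Rmult_lt_0_compat; auto.
  apply (Rs_ge_term N (fun u0 => pi u0 * Pp t u0 v)); auto.
  intros j Hj. apply Rmult_le_pos; auto. apply Ppow_nonneg; auto. Qed.

End Markov.

Lemma Rs_abs_mul N a (Q : nat -> R) : (forall k, (k < N)%nat -> 0 <= Q k) ->
  Rabs (Rsum N (fun k => a k * Q k)) <= Rsum N (fun k => Rabs (a k) * Q k).
Proof. intros H. eapply Rle_trans; [apply Rs_abs|]. apply Rs_le; intros k Hk.
  rewrite Rabs_mult, (Rabs_pos_eq (Q k)); auto; lra. Qed.

Lemma contract1 N a (Q : nat -> nat -> R) :
  (forall k u, (k < N)%nat -> (u < N)%nat -> 0 <= Q k u) -> (forall k, (k < N)%nat -> Rsum N (fun u => Q k u) = 1) ->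
  Rsum N (fun u => Rabs (Rsum N (fun k => a k * Q k u))) <= Rsum N (fun k => Rabs (a k)).
Proof. intros H1 H2. eapply Rle_trans with (Rsum N (fun u => Rsum N (fun k => Rabs (a k) * Q k u))).
  apply Rs_le; intros u Hu; apply Rs_abs_mul; auto.
  rewrite Rs_swap. apply Rs_le; intros k Hk. rewrite Rs_scal, H2; auto; lra. Qed.

Lemma contract N a (Q : nat -> nat -> R) B : Rsum N a = 0 ->
  (forall k k', (k < N)%nat -> (k' < N)%nat -> Rsum N (fun u => Rabs (Q k u - Q k' u)) <= 2 * B) ->
  Rsum N (fun u => Rabs (Rsum N (fun k => a k * Q k u))) <= B * Rsum N (fun k => Rabs (a k)).
Proof.
  intros Ha HQ.
  set (ap := fun k => Rmax (a k) 0). set (an := fun k => Rmax (- a k) 0).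
  assert (Hpa : forall k, a k = ap k - an k /\ Rabs (a k) = ap k + an k /\ 0 <= ap k /\ 0 <= an k).
  { intros k. unfold ap, an, Rmax. destruct (Rle_dec (a k) 0), (Rle_dec (- a k) 0); unfold Rabs;
    destruct (Rcase_abs (a k)); lra. }
  set (al := Rsum N ap).
  assert (Hsum : Rsum N an = al).
  { unfold al. rewrite (Rs_ext N a (fun k => ap k - an k)) in Ha by (intros; apply Hpa). rewrite Rs_minus in Ha. lra. }
  assert (Habs : Rsum N (fun k => Rabs (a k)) = 2 * al).
  { rewrite (Rs_ext _ _ (fun k => ap k + an k)) by (intros; apply Hpa). rewrite Rs_plus, Hsum. unfold al; ring. }
  assert (Hal : 0 <= al) by (apply Rs_nonneg; intros; apply Hpa).
  rewrite Habs.
  destruct Hal as [Hal|Hal].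
  2:{ assert (forall k, (k < N)%nat -> a k = 0).
      { intros k Hk. destruct (Hpa k) as [E [_ [H1 H2]]]. 
        assert (ap k <= al) by (apply (Rs_ge_term N ap); auto; intros; apply Hpa).
        assert (an k <= al) by (rewrite <- Hsum; apply (Rs_ge_term N an); auto; intros; apply Hpa). lra. }
      rewrite (Rs_ext _ _ (fun _ => 0)). rewrite Rs_const. rewrite <- Hal; lra.
      intros u Hu. rewrite (Rs_ext _ _ (fun _ => 0)). rewrite Rs_const, Rmult_0_r, Rabs_R0. auto.
      intros k Hk. rewrite H; auto; ring. }
  assert (Hid : forall u, al * Rsum N (fun k => a k * Q k u) =
     Rsum N (fun k => Rsum N (fun k' => ap k * an k' * (Q k u - Q k' u)))).
  { intros u. rewrite (Rs_ext N (fun k => Rsum N (fun k' => ap k * an k' * (Q k u - Q k' u)))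
      (fun k => ap k * Q k u * Rsum N an - ap k * Rsum N (fun k' => an k' * Q k' u))).
    rewrite Rs_minus, Rs_scal_r, Rs_scal_r. fold al. rewrite Hsum.
    rewrite (Rs_ext N (fun k => a k * Q k u) (fun k => ap k * Q k u - an k * Q k u)) by (intros k _; rewrite (proj1 (Hpa k)); ring).
    rewrite Rs_minus. ring.
    intros k _. rewrite <- Rs_scal, <- Rs_scal, <- Rs_minus. apply Rs_ext; intros; ring. }
  apply Rmult_le_reg_l with al; auto.
  rewrite <- Rs_scal.
  eapply Rle_trans with (Rsum N (fun u => Rsum N (fun k => Rsum N (fun k' => ap k * an k' * Rabs (Q k u - Q k' u))))).
  { apply Rs_le; intros u Hu. replace (al * Rabs (Rsum N (fun k => a k * Q k u))) with
      (Rabs (al * Rsum N (fun k => a k * Q k u))) by (rewrite Rabs_mult, Rabs_pos_eq; lra).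
    rewrite Hid. eapply Rle_trans; [apply Rs_abs|]. apply Rs_le; intros k Hk.
    eapply Rle_trans; [apply Rs_abs|]. apply Rs_le; intros k' Hk'. rewrite Rabs_mult, Rabs_pos_eq. lra.
    apply Rmult_le_pos; apply Hpa. }
  rewrite Rs_swap. 
  eapply Rle_trans with (Rsum N (fun k => Rsum N (fun k' => ap k * an k' * (2 * B)))).
  { apply Rs_le; intros k Hk. rewrite Rs_swap. apply Rs_le; intros k' Hk'.
    rewrite Rs_scal. apply Rmult_le_compat_l. apply Rmult_le_pos; apply Hpa. auto. }
  rewrite (Rs_ext _ _ (fun k => ap k * (Rsum N an * (2 * B)))).
  rewrite Rs_scal_r. fold al. rewrite Hsum. lra.
  intros k _. rewrite <- Rs_scal_r, <- Rs_scal. apply Rs_ext; intros; ring.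
Qed.

Section Mix.
Variables (N : nat) (P : nat -> nat -> R) (pi : nat -> R) (tstar : nat).
Hypothesis Hst : stochastic N P.
Hypothesis Hstat : stationary N P pi.
Hypothesis Hmix : is_mixing_rate N P pi tstar.

Notation Pp := (Ppow N P).

Definition Good t B := forall k k', (k < N)%nat -> (k' < N)%nat -> Rsum N (fun u => Rabs (Pp t k u - Pp t k' u)) <= 2 * B.

Lemma G_comp s t B1 B2 : 0 <= B2 -> Good s B1 -> Good t B2 -> Good (s + t) (B1 * B2).
Proof. intros HB G1 G2 k k' Hk Hk'.
  rewrite (Rs_ext _ _ (fun u => Rabs (Rsum N (fun j => (Pp s k j - Pp s k' j) * Pp t j u)))).
  2:{ intros u Hu. rewrite !Ppow_CK by auto. rewrite <- Rs_minus. f_equal. apply Rs_ext; intros; ring. }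
  eapply Rle_trans. apply contract with (B := B2).
  - rewrite Rs_minus, !Ppow_rows; auto; ring.
  - auto.
  - specialize (G1 k k' Hk Hk'). nra. Qed.

Lemma G_mono t B : Good t B -> Good (S t) B.
Proof. intros G k k' Hk Hk'. simpl.
  rewrite (Rs_ext _ _ (fun u => Rabs (Rsum N (fun j => (Pp t k j - Pp t k' j) * P j u)))).
  2:{ intros u Hu. rewrite <- Rs_minus. f_equal. apply Rs_ext; intros; ring. }
  eapply Rle_trans. apply contract1. intros; apply Hst; auto. intros; apply Hst; auto. apply G; auto. Qed.

Lemma G_mono_le t t' B : (t <= t')%nat -> Good t B -> Good t' B.
Proof. induction 1; auto. intros; apply G_mono; auto. Qed.

Lemma G_0 : Good 0 1.
Proof. intros k k' Hk Hk'. simpl.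
  eapply Rle_trans with (Rsum N (fun u => (if Nat.eq_dec k u then 1 else 0) * 1 + (if Nat.eq_dec k' u then 1 else 0) * 1)).
  apply Rs_le; intros u _. destruct (Nat.eq_dec k u), (Nat.eq_dec k' u); unfold Rabs; destruct Rcase_abs; lra.
  rewrite Rs_plus, (Rs_delta_r N (fun _ => 1)), (Rs_delta_r N (fun _ => 1)); auto; lra. Qed.

Lemma dmono t v : (v < N)%nat -> Rsum N (fun u => Rabs (Pp (S t) v u - pi u)) <= Rsum N (fun u => Rabs (Pp t v u - pi u)).
Proof. intros Hv. simpl.
  rewrite (Rs_ext _ _ (fun u => Rabs (Rsum N (fun j => (Pp t v j - pi j) * P j u)))).
  apply contract1. intros; apply Hst; auto. intros; apply Hst; auto.
  intros u Hu. destruct Hstat as [_ [_ Hs]]. rewrite <- (Hs u Hu) at 1. rewrite <- Rs_minus. f_equal. apply Rs_ext; intros; ring. Qed.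

Lemma dmono_le t t' v : (v < N)%nat -> (t <= t')%nat -> Rsum N (fun u => Rabs (Pp t' v u - pi u)) <= Rsum N (fun u => Rabs (Pp t v u - pi u)).
Proof. intros Hv. induction 1. lra. eapply Rle_trans; [apply dmono|]; auto. Qed.

Lemma d_star v : (v < N)%nat -> Rsum N (fun u => Rabs (Pp tstar v u - pi u)) <= / 2.
Proof. intros Hv. destruct Hmix as [H _]. destruct (H v Hv) as [tv [[Htv _] Hle]].
  unfold dTV_t in Htv. eapply Rle_trans. apply (dmono_le tv); auto. lra. Qed.

Lemma G_star : Good tstar (/ 2).
Proof. intros k k' Hk Hk'. eapply Rle_trans with (Rsum N (fun u => Rabs (Pp tstar k u - pi u) + Rabs (Pp tstar k' u - pi u))).
  apply Rs_le; intros u _. replace (Pp tstar k u - Pp tstar k' u) with ((Pp tstar k u - pi u) - (Pp tstar k' u - pi u)) by ring.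
  eapply Rle_trans; [apply Rabs_triang|]. rewrite Rabs_Ropp. lra.
  rewrite Rs_plus. pose proof (d_star k Hk). pose proof (d_star k' Hk'). lra. Qed.

Lemma G_l l : Good (l * tstar) ((/ 2) ^ l).
Proof. induction l. simpl. apply G_0.
  simpl. replace ((/ 2) * (/ 2) ^ l) with (/ 2 * (/ 2) ^ l) by ring. apply G_comp; auto.
  apply pow_le; lra. apply G_star. Qed.

Lemma G_all s : (0 < tstar)%nat -> Good s ((/ 2) ^ (s / tstar)).
Proof. intros H. apply G_mono_le with (s / tstar * tstar)%nat. 
  rewrite Nat.mul_comm. apply Nat.mul_div_le; lia. apply G_l. Qed.

Lemma D_bound t B w : (w < N)%nat -> Good t B -> Rsum N (fun u => Rabs (Pp t w u - pi u)) <= 2 * B.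
Proof. intros Hw G. destruct Hstat as [Hp [Hs1 Hs]].
  eapply Rle_trans with (Rsum N (fun u => Rsum N (fun v => pi v * Rabs (Pp t w u - Pp t v u)))).
  - apply Rs_le; intros u Hu.
    replace (Pp t w u - pi u) with (Rsum N (fun v => pi v * (Pp t w u - Pp t v u))).
    eapply Rle_trans; [apply Rs_abs|]. apply Rs_le; intros v Hv. rewrite Rabs_mult, Rabs_pos_eq; auto; lra.
    rewrite (Rs_ext _ _ (fun v => pi v * Pp t w u - pi v * Pp t v u)) by (intros; ring).
    rewrite Rs_minus, Rs_scal_r, Hs1, stat_t; auto; ring.
  - rewrite Rs_swap. eapply Rle_trans with (Rsum N (fun v => pi v * (2 * B))).
    apply Rs_le; intros v Hv. rewrite Rs_scal. apply Rmult_le_compat_l; auto.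
    rewrite Rs_scal_r, Hs1. lra. Qed.

End Mix.

Lemma lsum_deg (f : nat -> R) (c : R) (l : list nat) : fold_right Rplus 0 (map (fun v => if Rlt_dec 0 (f v) then c else 0) l) =
  INR (length (filter (fun v => if Rlt_dec 0 (f v) then true else false) l)) * c.
Proof. induction l; simpl. ring. destruct (Rlt_dec 0 (f a)); simpl length; rewrite IHl; try rewrite S_INR; ring. Qed.

Lemma deg_sum N P u c : Rsum N (fun v => if Rlt_dec 0 (P u v) then c else 0) = INR (degree N P u) * c.
Proof. apply lsum_deg. Qed.

Lemma fold_max_ge (f : nat -> nat) l u : In u l -> (f u <= fold_right Nat.max 0 (map f l))%nat.
Proof. induction l; simpl; intros H; [tauto|]. destruct H; subst; [lia|]. specialize (IHl H); lia. Qed.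

Lemma deg_le N P u : (u < N)%nat -> (degree N P u <= max_degree N P)%nat.
Proof. intros Hu. apply fold_max_ge. apply in_seq; lia. Qed.

Lemma fold_min_le (f : nat -> R) a l u : In u l -> fold_right Rmin a (map f l) <= f u.
Proof. induction l; simpl; intros H; [tauto|]. destruct H; subst. apply Rmin_l.
  eapply Rle_trans; [apply Rmin_r|]; auto. Qed.

Lemma fold_min_pos (f : nat -> R) a l : 0 < a -> (forall u, In u l -> 0 < f u) -> 0 < fold_right Rmin a (map f l).
Proof. induction l; simpl; intros Ha H; auto. apply Rmin_glb_lt; auto. Qed.

Lemma pi_min_le N pi u : (u < N)%nat -> pi_min N pi <= pi u.
Proof. intros Hu. apply fold_min_le. apply in_seq; lia. Qed.

Lemma pi_min_pos N pi : (0 < N)%nat -> (forall u, (u < N)%nat -> 0 < pi u) -> 0 < pi_min N pi.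
Proof. intros HN H. apply fold_min_pos. apply H; auto. intros u Hu; apply in_seq in Hu; apply H; lia. Qed.

Definition sst N P ord chi0 t := snd (qr_state N P ord chi0 t).

Lemma chi_S N P ord chi0 t u : chi N P ord chi0 (S t) u =
  nsum N (fun v => Icount P ord v u (sst N P ord chi0 t v) (sst N P ord chi0 t v + chi N P ord chi0 t v)).
Proof. unfold chi, sst. simpl. destruct (qr_state N P ord chi0 t). reflexivity. Qed.

Lemma ind_sum T t : Rsum T (fun s => if lt_dec s t then 1 else 0) = INR (Nat.min T t).
Proof. induction T. reflexivity. rewrite Rs_S, IHT. destruct (lt_dec T t).
  rewrite !Nat.min_l by lia. rewrite S_INR; ring. rewrite !Nat.min_r by lia. ring. Qed.

Section SumF.
Variable ts : nat.
Hypothesis Hts : (0 < ts)%nat.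
Definition Ff s := if lt_dec s ts then 0 else (/ 2) ^ (s / ts).

Lemma Ff_nonneg s : 0 <= Ff s.
Proof. unfold Ff. destruct (lt_dec s ts). lra. apply pow_le; lra. Qed.

Lemma sumF_q q : Rsum (S q * ts) Ff <= INR ts * (1 - (/ 2) ^ q).
Proof. induction q.
  - simpl. rewrite Nat.add_0_r. rewrite (Rs_ext _ _ (fun _ => 0)). rewrite Rs_const; lra.
    intros i Hi; unfold Ff; destruct (lt_dec i ts); [auto|lia].
  - replace (S (S q) * ts)%nat with (S q * ts + ts)%nat by lia. rewrite Rs_split.
    rewrite (Rs_ext ts _ (fun _ => (/ 2) ^ (S q))). rewrite Rs_const.
    simpl pow. simpl pow in IHq. lra.
    intros i Hi. unfold Ff. destruct (lt_dec (S q * ts + i) ts). nia.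
    f_equal. rewrite Nat.div_add_l by lia. rewrite Nat.div_small by lia. lia.
Qed.

Lemma sumF T : Rsum T Ff <= INR ts.
Proof. eapply Rle_trans with (Rsum (S T * ts) Ff).
  - replace (S T * ts)%nat with (T + (S T * ts - T))%nat by nia. rewrite Rs_split.
    assert (0 <= Rsum (S T * ts - T) (fun i => Ff (T + i)%nat)) by (apply Rs_nonneg; intros; apply Ff_nonneg). lra.
  - eapply Rle_trans; [apply sumF_q|]. assert (0 < (/2)^T) by (apply pow_lt; lra). pose proof (pos_INR ts). nra.
Qed.
End SumF.

Section Main.
Variables (N : nat) (P : nat -> nat -> R) (pi : nat -> R) (tstar : nat) (ord : nat -> list nat) (chi0 : nat -> nat).
Hypothesis Herg : ergodic N P.
Hypothesis Hstat : stationary N P pi.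
Hypothesis Hrev : reversible N P pi.
Hypothesis Hmix : is_mixing_rate N P pi tstar.
Hypothesis Hord : is_nbr_ordering N P ord.

Let Hst : stochastic N P := proj1 Herg.
Let Hirr : irreducible N P := proj1 (proj2 Herg).

Definition xx t u := INR (chi N P ord chi0 t u).
Definition ZZ t v u := INR (Icount P ord v u (sst N P ord chi0 t v) (sst N P ord chi0 t v + chi N P ord chi0 t v)).
Definition ee t u := xx (S t) u - Rsum N (fun v => xx t v * P v u).
Definition MM := INR (nsum N chi0).
Definition LL := lg (MM + 1).

Lemma xx_S t u : xx (S t) u = Rsum N (fun v => ZZ t v u).
Proof. unfold xx. rewrite chi_S, INR_nsum. reflexivity. Qed.

Lemma ZZ_sum t v : (v < N)%nat -> Rsum N (fun u => ZZ t v u) = xx t v.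
Proof. intros Hv. unfold ZZ. apply (Icount_sum N P ord v Hst Hord Hv). Qed.

Lemma cons_t t : Rsum N (xx t) = MM.
Proof. induction t. unfold xx, MM. rewrite INR_nsum. reflexivity.
  rewrite (Rs_ext _ _ (fun u => Rsum N (fun v => ZZ t v u))) by (intros; apply xx_S).
  rewrite Rs_swap. rewrite <- IHt. apply Rs_ext; intros; apply ZZ_sum; auto. Qed.

Lemma xx_le t v : (v < N)%nat -> xx t v <= MM.
Proof. intros Hv. rewrite <- (cons_t t). apply (Rs_ge_term N (xx t)); auto. intros; apply pos_INR. Qed.

Lemma ee_sum t : Rsum N (ee t) = 0.
Proof. unfold ee. rewrite Rs_minus. change (fun u => xx (S t) u) with (xx (S t)). rewrite cons_t.
  rewrite Rs_swap. rewrite (Rs_ext _ _ (fun v => xx t v)). rewrite cons_t. ring.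
  intros v Hv. rewrite Rs_scal. destruct Hst as [_ Hs]. rewrite Hs; auto; ring. Qed.

Lemma LL_nonneg : 0 <= LL.
Proof. apply lg_nonneg. unfold MM. pose proof (pos_INR (nsum N chi0)). lra. Qed.

Lemma ee_bound t u : (u < N)%nat -> Rabs (ee t u) <= 2 * LL * INR (max_degree N P).
Proof. intros Hu. unfold ee. rewrite xx_S, <- Rs_minus.
  eapply Rle_trans; [apply Rs_abs|].
  eapply Rle_trans with (Rsum N (fun v => if Rlt_dec 0 (P u v) then 2 * LL else 0)).
  - apply Rs_le; intros v Hv. destruct (Rlt_dec 0 (P u v)).
    + unfold ZZ, xx. eapply Rle_trans. apply (Icount_disc N P ord v Hst Hord Hv); auto.
      apply Rmult_le_compat_l. lra. apply lg_le. pose proof (pos_INR (chi N P ord chi0 t v)); lra.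
      pose proof (xx_le t v Hv). unfold xx in H. lra.
    + assert (P u v = 0) by (destruct Hst as [Hp _]; specialize (Hp u v Hu Hv); lra).
      assert (P v u = 0).
      { pose proof (Hrev u v Hu Hv). rewrite H, Rmult_0_r in H0. pose proof (pi_pos N P pi Hst Hstat Hirr v Hv).
        destruct (Rmult_integral _ _ (eq_sym H0)); lra. }
      unfold ZZ. rewrite (Icount_out N P ord v Hst Hord Hv); auto. rewrite H0. simpl. rewrite Rmult_0_r, Rminus_0_r, Rabs_R0. lra.
      intros Hin. apply (Hord v Hv) in Hin. lra.
  - rewrite deg_sum. pose proof (le_INR _ _ (deg_le N P u Hu)). pose proof LL_nonneg. nra.
Qed.

Lemma decomp T w : (w < N)%nat ->
  xx T w - mu N P chi0 T w = Rsum T (fun t => Rsum N (fun u => ee t u * Ppow N P (T - S t) u w)).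
Proof. revert w. induction T; intros w Hw.
  - unfold xx, mu. simpl Ppow. rewrite (Rs_delta_l N (fun v => INR (chi0 v))) by auto. unfold chi; simpl. rewrite Rs_0. ring.
  - rewrite Rs_S. replace (S T - S T)%nat with 0%nat by lia. simpl Ppow at 2.
    rewrite (Rs_delta_l N (ee T)) by auto.
    assert (Hmu : mu N P chi0 (S T) w = Rsum N (fun k => mu N P chi0 T k * P k w)).
    { unfold mu. simpl. rewrite (Rs_ext _ _ (fun v => Rsum N (fun k => INR (chi0 v) * Ppow N P T v k * P k w))).
      rewrite Rs_swap. apply Rs_ext; intros k _. rewrite <- Rs_scal_r. reflexivity.
      intros v _. rewrite <- Rs_scal. apply Rs_ext; intros; ring. }
    rewrite Hmu. unfold ee at 2.
    rewrite (Rs_ext T _ (fun t => Rsum N (fun k => Rsum N (fun u => ee t u * Ppow N P (T - S t) u k) * P k w))).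
    rewrite Rs_swap. rewrite (Rs_ext N (fun k => Rsum T (fun t => _ * P k w)) (fun k => (xx T k - mu N P chi0 T k) * P k w)).
    rewrite (Rs_ext N (fun k => (xx T k - mu N P chi0 T k) * P k w) (fun k => xx T k * P k w - mu N P chi0 T k * P k w)) by (intros; ring).
    rewrite Rs_minus. ring.
    intros k Hk. rewrite IHT by auto. rewrite Rs_scal_r. reflexivity.
    intros t Ht. replace (S T - S t)%nat with (S (T - S t)) by lia. simpl Ppow.
    rewrite (Rs_ext _ _ (fun u => Rsum N (fun k => ee t u * Ppow N P (T - S t) u k * P k w))).
    rewrite Rs_swap. apply Rs_ext; intros k _. rewrite <- Rs_scal_r. reflexivity.
    intros u _. rewrite <- Rs_scal. apply Rs_ext; intros; ring.
Qed.


Definition KK w := pi w / pi_min N pi.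
Definition Dd w s := Rsum N (fun u => Rabs (Ppow N P s w u - pi u)).
Definition hh w s := if lt_dec s tstar then 1 else Dd w s.
Definition CC := 2 * LL * INR (max_degree N P).

Lemma pipos u : (u < N)%nat -> 0 < pi u.
Proof. apply (pi_pos N P pi Hst Hstat Hirr). Qed.

Lemma ratio_le u w : (u < N)%nat -> (w < N)%nat -> pi w / pi u <= KK w.
Proof. intros Hu Hw. unfold KK, Rdiv. apply Rmult_le_compat_l. left; apply pipos; auto.
  apply Rinv_le_contravar. apply pi_min_pos. lia. apply pipos. apply pi_min_le; auto. Qed.

Lemma Ppow_col s u w : (u < N)%nat -> (w < N)%nat -> Ppow N P s u w = pi w / pi u * Ppow N P s w u.
Proof. intros Hu Hw. pose proof (rev_t N P pi Hrev s u w Hu Hw). pose proof (pipos u Hu).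
  apply Rmult_eq_reg_l with (pi u). rewrite H. field. lra. lra. Qed.

Lemma CC_nonneg : 0 <= CC.
Proof. unfold CC. pose proof LL_nonneg. pose proof (pos_INR (max_degree N P)). apply Rmult_le_pos; lra. Qed.

Lemma term_bound t s w : (w < N)%nat -> Rabs (Rsum N (fun u => ee t u * Ppow N P s u w)) <= CC * KK w * hh w s.
Proof. intros Hw. pose proof CC_nonneg. unfold hh. destruct (lt_dec s tstar).
  - eapply Rle_trans. apply Rs_abs_mul. intros; apply Ppow_nonneg; auto.
    eapply Rle_trans with (Rsum N (fun u => CC * (KK w * Ppow N P s w u))).
    + apply Rs_le; intros u Hu. rewrite Ppow_col by auto. apply Rmult_le_compat.
      apply Rabs_pos. apply Rmult_le_pos. left; apply Rdiv_lt_0_compat; apply pipos; auto. apply Ppow_nonneg; auto.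
      apply ee_bound; auto. apply Rmult_le_compat_r. apply Ppow_nonneg; auto. apply ratio_le; auto.
    + rewrite Rs_scal, Rs_scal, Ppow_rows; auto. lra.
  - rewrite (Rs_ext _ _ (fun u => ee t u * (Ppow N P s u w - pi w) + ee t u * pi w)) by (intros; ring).
    rewrite Rs_plus, Rs_scal_r, ee_sum, Rmult_0_l, Rplus_0_r.
    eapply Rle_trans; [apply Rs_abs|].
    eapply Rle_trans with (Rsum N (fun u => CC * (KK w * Rabs (Ppow N P s w u - pi u)))).
    + apply Rs_le; intros u Hu. rewrite Rabs_mult. apply Rmult_le_compat. apply Rabs_pos. apply Rabs_pos.
      apply ee_bound; auto.
      rewrite Ppow_col by auto. pose proof (pipos u Hu).
      replace (pi w / pi u * Ppow N P s w u - pi w) with (pi w / pi u * (Ppow N P s w u - pi u)) by (field; lra).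
      rewrite Rabs_mult, (Rabs_pos_eq (pi w / pi u)). apply Rmult_le_compat_r. apply Rabs_pos. apply ratio_le; auto.
      left; apply Rdiv_lt_0_compat; apply pipos; auto.
    + rewrite Rs_scal, Rs_scal. unfold Dd. lra.
Qed.

Lemma tstar0_N1 : tstar = 0%nat -> (N <= 1)%nat.
Proof. intros H0. destruct (le_lt_dec N 1) as [|HN]; auto. exfalso.
  pose proof (G_star N P pi tstar Hst Hstat Hmix 0%nat 1%nat ltac:(lia) HN) as G. rewrite H0 in G.
  rewrite (Rs_ext _ _ (fun u => (if Nat.eq_dec 0 u then 1 else 0) * 1 + (if Nat.eq_dec 1 u then 1 else 0) * 1)) in G.
  rewrite Rs_plus, (Rs_delta_r N (fun _ => 1)), (Rs_delta_r N (fun _ => 1)) in G; try lia. lra.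
  intros u _. change (Ppow N P 0 0 u) with (if Nat.eq_dec 0 u then 1 else 0).
  change (Ppow N P 0 1 u) with (if Nat.eq_dec 1 u then 1 else 0). destruct (Nat.eq_dec 0 u), (Nat.eq_dec 1 u); subst; try lia; unfold Rabs; destruct Rcase_abs; lra.
Qed.

Lemma sum_hh T w : (w < N)%nat -> Rsum T (hh w) <= 3 * INR tstar.
Proof. intros Hw. destruct (Nat.eq_dec tstar 0) as [H0|Hts].
  - assert (HN : N = 1%nat) by (pose proof (tstar0_N1 H0); lia). 
    rewrite (Rs_ext _ _ (fun _ => 0)). rewrite Rs_const, H0. simpl; lra.
    intros s _. unfold hh. rewrite H0. destruct (lt_dec s 0); [lia|]. unfold Dd.
    assert (w = 0%nat) by lia. subst w.
    pose proof (Ppow_rows N P Hst s 0 Hw). destruct Hstat as [_ [Hs1 _]].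
    rewrite HN in *. rewrite Rs_S, Rs_0 in *. rewrite Rplus_0_l in *. rewrite H, Hs1. replace (1 - 1) with 0 by ring.
    apply Rabs_R0.
  - eapply Rle_trans with (Rsum T (fun s => (if lt_dec s tstar then 1 else 0) + 2 * Ff tstar s)).
    + apply Rs_le; intros s _. unfold hh, Ff. destruct (lt_dec s tstar). lra.
      unfold Dd. eapply Rle_trans. apply (D_bound N P pi Hstat) with (B := (/2) ^ (s / tstar)); auto.
      apply (G_all N P pi tstar Hst Hstat Hmix); auto. lia. lra.
    + rewrite Rs_plus, Rs_scal, ind_sum. pose proof (sumF tstar ltac:(lia) T).
      pose proof (le_INR _ _ (Nat.le_min_r T tstar)). lra.
Qed.

Lemma main_in T w : (w < N)%nat ->
  Rabs (INR (chi N P ord chi0 T w) - mu N P chi0 T w) <=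
      6 * pi w / pi_min N pi * lg (INR (nsum N chi0) + 1) * INR tstar * INR (max_degree N P).
Proof. intros Hw. change (INR (chi N P ord chi0 T w)) with (xx T w). rewrite decomp by auto.
  assert (HK : 0 <= KK w). { unfold KK. apply Rmult_le_pos. left; apply pipos; auto. left; apply Rinv_0_lt_compat, pi_min_pos. lia. intros; apply pipos; auto. }
  pose proof CC_nonneg.
  eapply Rle_trans; [apply Rs_abs|].
  eapply Rle_trans with (Rsum T (fun t => CC * KK w * hh w (T - S t))).
  apply Rs_le; intros t _. apply term_bound; auto.
  rewrite Rs_scal, (Rs_rev T (hh w)).
  eapply Rle_trans. apply Rmult_le_compat_l. apply Rmult_le_pos; auto. apply sum_hh; auto.
  unfold CC, KK, LL, MM. right. unfold Rdiv. ring.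
Qed.

End Main.

Theorem theorem5p7 (N : nat) (P : nat -> nat -> R) (pi : nat -> R) (tstar : nat)
  (ord : nat -> list nat) (chi0 : nat -> nat) :
  ergodic N P ->
  stationary N P pi ->
  reversible N P pi ->
  is_mixing_rate N P pi tstar ->
  is_nbr_ordering N P ord ->
  forall (T w : nat), (w < N)%nat ->
    Rabs (INR (chi N P ord chi0 T w) - mu N P chi0 T w) <=
      6 * pi w / pi_min N pi * lg (INR (nsum N chi0) + 1) * INR tstar
        * INR (max_degree N P).
Proof.
  intros Herg Hstat Hrev Hmix Hord T w Hw.
  exact (main_in N P pi tstar ord chi0 Herg Hstat Hrev Hmix Hord T w Hw).
Qed.
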